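(* For every integer $n\ge 0$ and $x>0$, $$\big[\ln\partial_x,\ \partial_x\big]\, x^n = \frac{1}{x}\,\delta_{n0},$$ where $[A,B]=AB-BA$, $\partial_x$ is the ordinary derivative, $\delta_{n0}$ is the Kronecker delta, and $\ln\partial_x$ is defined in the context below (with $(\ln\partial_x)\,0 = 0$).
   Context: For real $\nu$, $x>0$ and $\mu\ge 0$, the fractional derivative of a power is defined by $\partial_x^\nu x^\mu = \frac{\Gamma(\mu+1)}{\Gamma(\mu-\nu+1)}\,x^{\mu-\nu}$. The logarithm of the derivative operator is defined on powers by $(\ln\partial_x)\,x^\mu := \lim_{\nu\to 0}\frac{\partial_x^\nu x^\mu - x^\mu}{\nu}$ and extended linearly; the operator $\partial_x\circ\ln\partial_x$ applies the ordinary derivative to the resulting function (which may contain $\ln x$). *)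

(* Defs.v *)
From Stdlib Require Import Reals Lra List.
From Coquelicot Require Import Coquelicot.
Open Scope R_scope.

Definition Gamma (s : R) : R :=
  RInt_gen (fun t => Rpower t (s - 1) * exp (- t)) (at_right 0) (Rbar_locally p_infty).

Definition frac_deriv_pow (nu mu x : R) : R :=
  Gamma (mu + 1) / Gamma (mu - nu + 1) * Rpower x (mu - nu).

Definition lnD_pow (mu x : R) : R :=
  real (Lim (fun nu => (frac_deriv_pow nu mu x - Rpower x mu) / nu) 0).

(* Finite linear combinations of powers: [(c_1,mu_1); ...] means sum c_i x^mu_i. *)
Definition powcomb := list (R * R).

Definition eval_pc (p : powcomb) (x : R) : R :=
  fold_right (fun cm acc => fst cm * Rpower x (snd cm) + acc) 0 p.

Definition lnD (p : powcomb) (x : R) : R :=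
  fold_right (fun cm acc => fst cm * lnD_pow (snd cm) x + acc) 0 p.

Definition d_pc (p : powcomb) : powcomb :=
  flat_map (fun cm => if Req_EM_T (snd cm) 0 then nil
                      else ((fst cm * snd cm, snd cm - 1) :: nil)) p.

Definition monomial (n : nat) : powcomb := (1, INR n) :: nil.

(* Main.v *)
Require Import Defs.
From Stdlib Require Import Reals.
From Coquelicot Require Import Coquelicot.
From Stdlib Require Import Lra Classical.
Open Scope R_scope.

Definition gi (s t : R) := Rpower t (s - 1) * exp (- t).

Lemma exp_le' x y : x <= y -> exp x <= exp y.
Proof. intros [h|h]. left; now apply exp_increasing. right; now subst. Qed.

Lemma gi_pos s t : 0 < t -> 0 < gi s t.
Proof. intros; unfold gi, Rpower; apply Rmult_lt_0_compat; apply exp_pos. Qed.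

Lemma gi_cont s t : 0 < t -> continuous (gi s) t.
Proof.
  intros ht; apply (ex_derive_continuous (K:=R_AbsRing) (V:=R_NormedModule)); unfold gi, Rpower; auto_derive; lra.
Qed.

Lemma gi_int s a b : 0 < a -> 0 < b -> ex_RInt (gi s) a b.
Proof.
  intros ha hb; apply (ex_RInt_continuous (V:=R_CompleteNormedModule)); intros z [hz _].
  apply gi_cont. assert (0 < Rmin a b) by (apply Rmin_glb_lt; lra). lra.
Qed.

Lemma ln_le_m1 y : 0 < y -> ln y <= y - 1.
Proof. intros hy; pose proof (exp_ineq1_le (ln y)) as H; rewrite exp_ln in H; lra. Qed.

Lemma bound_exp p : exists C, forall t, 1 <= t -> Rpower t p * exp (- t) <= C.
Proof.
  destruct (Rle_dec p 0) as [hp|hp].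
  - exists 1; intros t ht; unfold Rpower; rewrite <- exp_plus.
    rewrite <- exp_0; apply exp_le'.
    assert (0 <= ln t) by (rewrite <- ln_1; apply ln_le; lra).
    nra.
  - exists (exp (p * ln p - p)); intros t ht; unfold Rpower; rewrite <- exp_plus.
    apply exp_le'.
    assert (hp' : 0 < p) by lra.
    pose proof (ln_le_m1 (t / p) ltac:(apply Rdiv_lt_0_compat; lra)) as H.
    rewrite ln_div in H by lra.
    assert (p * (ln t - ln p) <= p * (t / p - 1)) by (apply Rmult_le_compat_l; lra).
    assert (p * (t/p) = t) by (field; lra). nra.
Qed.

Lemma gi_mono s a b a' b' : 0 < a' -> a' <= a -> a <= b -> b <= b' ->
  RInt (gi s) a b <= RInt (gi s) a' b'.
Proof.
  intros h1 h2 h3 h4.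
  rewrite <- (RInt_Chasles (V:=R_CompleteNormedModule) (gi s) a' a b') by (apply gi_int; lra).
  rewrite <- (RInt_Chasles (V:=R_CompleteNormedModule) (gi s) a b b') by (apply gi_int; lra).
  assert (0 <= RInt (gi s) a' a).
  { apply RInt_ge_0; auto. apply gi_int; lra. intros; left; apply gi_pos; lra. }
  assert (0 <= RInt (gi s) b b').
  { apply RInt_ge_0; auto. apply gi_int; lra. intros; left; apply gi_pos; lra. }
  change plus with Rplus. lra.
Qed.

Lemma Rmin_pos a b : 0 < a -> 0 < b -> 0 < Rmin a b.
Proof. intros; apply Rmin_glb_lt; lra. Qed.

Lemma int_pow01 s a : 0 < s -> 0 < a <= 1 ->
  RInt (fun t => Rpower t (s - 1)) a 1 <= / s.
Proof.
  intros hs ha.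
  assert (H0 := is_RInt_derive (V:=R_CompleteNormedModule)
     (fun t => Rpower t s / s) (fun t => Rpower t (s - 1)) a 1).
  assert (H : is_RInt (fun t => Rpower t (s - 1)) a 1
             (minus (Rpower 1 s / s) (Rpower a s / s))).
  { apply H0.
    - intros x [hx _]. assert (0 < x) by (pose proof (Rmin_pos a 1); lra).
      unfold Rpower. auto_derive. lra.
      replace ((s-1) * ln x) with (s * ln x + - ln x) by ring.
      rewrite exp_plus, exp_Ropp, exp_ln by lra. field; lra.
    - intros x [hx _]. assert (0 < x) by (pose proof (Rmin_pos a 1); lra).
      apply (ex_derive_continuous (K:=R_AbsRing) (V:=R_NormedModule)).
      unfold Rpower; auto_derive; lra. }
  rewrite (is_RInt_unique _ _ _ _ H).
  assert (Rpower 1 s = 1) by (unfold Rpower; rewrite ln_1, Rmult_0_r; apply exp_0).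
  assert (0 < Rpower a s) by (unfold Rpower; apply exp_pos).
  unfold minus, plus, opp; simpl. rewrite H1.
  assert (0 < /s) by (apply Rinv_0_lt_compat; lra).
  unfold Rdiv. assert (0 < Rpower a s * / s) by (apply Rmult_lt_0_compat; lra). lra.
Qed.

Lemma int_inv2 C b : 0 <= C -> 1 <= b -> RInt (fun t => C / t^2) 1 b <= C.
Proof.
  intros hC hb.
  assert (H0 := is_RInt_derive (V:=R_CompleteNormedModule)
     (fun t => - C / t) (fun t => C / t^2) 1 b).
  assert (H : is_RInt (fun t => C / t^2) 1 b (minus (- C / b) (- C / 1))).
  { apply H0.
    - intros x [hx _]. assert (1 <= x) by (rewrite Rmin_left in hx; lra).
      auto_derive. lra. field; lra.
    - intros x [hx _]. assert (1 <= x) by (rewrite Rmin_left in hx; lra).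
      apply (ex_derive_continuous (K:=R_AbsRing) (V:=R_NormedModule)).
      auto_derive; nra. }
  rewrite (is_RInt_unique _ _ _ _ H).
  unfold minus, plus, opp; simpl.
  assert (0 <= C / b) by (apply Rdiv_le_0_compat; lra).
  unfold Rdiv in *. rewrite Rinv_1. lra.
Qed.

Lemma gamma_bound s : 0 < s -> exists M, forall a b, 0 < a -> a <= b -> RInt (gi s) a b <= M.
Proof.
  intros hs. destruct (bound_exp (s + 1)) as [C HC].
  assert (hC : 0 <= C).
  { specialize (HC 1 (Rle_refl 1)). unfold Rpower in HC.
    eapply Rle_trans; [|exact HC]. left; apply Rmult_lt_0_compat; apply exp_pos. }
  exists (/ s + C). intros a b ha hab.
  set (a' := Rmin a 1). set (b' := Rmax b 1).
  assert (ha' : 0 < a' <= 1) by (unfold a'; split; [apply Rmin_pos; lra | apply Rmin_r]).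
  assert (hb' : 1 <= b') by (unfold b'; apply Rmax_r).
  apply Rle_trans with (RInt (gi s) a' b').
  { apply gi_mono; [lra | unfold a'; apply Rmin_l | lra | unfold b'; apply Rmax_l]. }
  rewrite <- (RInt_Chasles (V:=R_CompleteNormedModule) (gi s) a' 1 b') by (apply gi_int; lra).
  change plus with Rplus.
  assert (RInt (gi s) a' 1 <= / s).
  { apply Rle_trans with (RInt (fun t => Rpower t (s - 1)) a' 1); [|apply int_pow01; lra].
    apply RInt_le. lra. apply gi_int; lra.
    apply (ex_RInt_continuous (V:=R_CompleteNormedModule)). intros z [hz _].
    assert (0 < z) by (pose proof (Rmin_pos a' 1); lra).
    apply (ex_derive_continuous (K:=R_AbsRing) (V:=R_NormedModule)).
    unfold Rpower; auto_derive; lra.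
    intros x hx. unfold gi. assert (exp (-x) <= 1) by (rewrite <- exp_0; apply exp_le'; lra).
    assert (0 < Rpower x (s - 1)) by (unfold Rpower; apply exp_pos). nra. }
  assert (RInt (gi s) 1 b' <= C).
  { apply Rle_trans with (RInt (fun t => C / t^2) 1 b'); [|apply int_inv2; lra].
    apply RInt_le. lra. apply gi_int; lra.
    apply (ex_RInt_continuous (V:=R_CompleteNormedModule)). intros z [hz _].
    rewrite Rmin_left in hz by lra.
    apply (ex_derive_continuous (K:=R_AbsRing) (V:=R_NormedModule)).
    auto_derive; nra.
    intros x hx. unfold gi. specialize (HC x ltac:(lra)).
    replace (s + 1) with ((s - 1) + INR 2) in HC by (simpl; ring).
    rewrite Rpower_plus, Rpower_pow in HC by lra.
    replace (C / x^2) with (C * / x^2) by reflexivity.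
    assert (0 < / x^2) by (apply Rinv_0_lt_compat; nra).
    apply Rle_trans with ((Rpower x (s - 1) * x ^ 2 * exp (- x)) * / x^2).
    right. field. nra.
    apply Rmult_le_compat_r; lra. }
  lra.
Qed.

Lemma gamma_exists s : 0 < s ->
  is_RInt_gen (gi s) (at_right 0) (Rbar_locally p_infty) (Gamma s) /\
  (forall a b, 0 < a -> a <= b -> RInt (gi s) a b <= Gamma s).
Proof.
  intros hs. destruct (gamma_bound s hs) as [M HM].
  set (E := fun y => exists a b, 0 < a /\ a <= b /\ y = RInt (gi s) a b).
  assert (hE : bound E) by (exists M; intros y (a & b & ha & hab & ->); auto).
  assert (hE' : exists y, E y) by (exists (RInt (gi s) 1 1); exists 1, 1; repeat split; lra).
  destruct (completeness E hE hE') as [l [Hub Hlub]].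
  assert (Hgen : is_RInt_gen (gi s) (at_right 0) (Rbar_locally p_infty) l).
  { intros P [eps HP].
    assert (Hex : exists a0 b0, 0 < a0 /\ a0 <= b0 /\ l - eps < RInt (gi s) a0 b0).
    { apply NNPP; intro Hn. assert (l <= l - eps).
      { apply Hlub. intros y (a & b & ha & hab & ->).
        destruct (Rle_lt_dec (RInt (gi s) a b) (l - eps)) as [h|h]; auto.
        exfalso; apply Hn; exists a, b; auto. }
      destruct eps; simpl in *; lra. }
    destruct Hex as (a0 & b0 & ha0 & hab0 & hlt).
    apply (Filter_prod _ _ _ (fun a => 0 < a /\ a < a0) (fun b => b0 < b)).
    - exists (mkposreal a0 ha0). intros y hy hy0. simpl in hy.
      unfold ball in hy; simpl in hy; unfold AbsRing_ball, abs, minus, plus, opp in hy; simpl in hy.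
      rewrite Ropp_0, Rplus_0_r, Rabs_pos_eq in hy; lra.
    - exists b0; auto.
    - intros a b ha hb. simpl. exists (RInt (gi s) a b). split.
      + apply (RInt_correct (V:=R_CompleteNormedModule)). apply gi_int; lra.
      + apply HP. unfold ball; simpl; unfold AbsRing_ball, abs, minus, plus, opp; simpl.
        assert (RInt (gi s) a b <= l) by (apply Hub; exists a, b; repeat split; lra).
        assert (RInt (gi s) a0 b0 <= RInt (gi s) a b) by (apply gi_mono; lra).
        rewrite Rabs_left1 by lra. lra. }
  assert (Gamma s = l).
  { unfold Gamma. change (fun t => Rpower t (s - 1) * exp (- t)) with (gi s).
    apply (is_RInt_gen_unique (V:=R_CompleteNormedModule)); auto. }
  rewrite H. split; auto.
  intros a b ha hab. apply Hub. exists a, b; auto.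
Qed.

Lemma gen_nonneg f l : (forall t, 0 < t -> 0 <= f t) ->
  is_RInt_gen f (at_right 0) (Rbar_locally p_infty) l -> 0 <= l.
Proof.
  intros hf hl.
  assert (H : norm l <= l).
  { apply (RInt_gen_norm (V:=R_CompleteNormedModule) (Fa := at_right 0) (Fb := Rbar_locally p_infty) f f l l); auto.
    - apply (Filter_prod _ _ _ (fun a => 0 < a /\ a < 1) (fun b => 1 < b)).
      + exists (mkposreal 1 Rlt_0_1). intros y hy hy0. simpl in hy.
        unfold ball in hy; simpl in hy; unfold AbsRing_ball, abs, minus, plus, opp in hy; simpl in hy.
        rewrite Ropp_0, Rplus_0_r, Rabs_pos_eq in hy; lra.
      + exists 1; auto.
      + intros a b ha hb; simpl; lra.
    - apply (Filter_prod _ _ _ (fun a => 0 < a) (fun b => 1 < b)).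
      + exists (mkposreal 1 Rlt_0_1). intros y hy hy0. auto.
      + exists 1; auto.
      + intros a b ha hb x [hx1 hx2]; simpl in *.
        change (norm (f x)) with (Rabs (f x)). rewrite Rabs_pos_eq. lra. apply hf; lra. }
  change (norm l) with (Rabs l) in H. pose proof (Rabs_pos l). lra.
Qed.

Lemma exp_convex u v lam : 0 <= lam <= 1 ->
  exp (lam * u + (1 - lam) * v) <= lam * exp u + (1 - lam) * exp v.
Proof.
  intros hl. set (w := lam * u + (1 - lam) * v).
  assert (e1 : exp u = exp w * exp (u - w)) by (rewrite <- exp_plus; f_equal; ring).
  assert (e2 : exp v = exp w * exp (v - w)) by (rewrite <- exp_plus; f_equal; ring).
  pose proof (exp_ineq1_le (u - w)); pose proof (exp_ineq1_le (v - w)).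
  pose proof (exp_pos w).
  assert (exp w * (1 + (u - w)) <= exp u) by (rewrite e1; apply Rmult_le_compat_l; lra).
  assert (exp w * (1 + (v - w)) <= exp v) by (rewrite e2; apply Rmult_le_compat_l; lra).
  assert (lam * (exp w * (1 + (u - w))) + (1 - lam) * (exp w * (1 + (v - w))) = exp w)
    by (unfold w; ring).
  nra.
Qed.

Lemma gamma_convex a b lam : 0 < a -> 0 < b -> 0 <= lam <= 1 ->
  Gamma (lam * a + (1 - lam) * b) <= lam * Gamma a + (1 - lam) * Gamma b.
Proof.
  intros ha hb hl. set (c := lam * a + (1 - lam) * b).
  assert (hc : 0 < c) by (unfold c; nra).
  destruct (gamma_exists a ha) as [Ha _].
  destruct (gamma_exists b hb) as [Hb _].
  destruct (gamma_exists c hc) as [Hc _].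
  assert (H := is_RInt_gen_minus _ _ _ _ (is_RInt_gen_plus _ _ _ _
       (is_RInt_gen_scal _ lam _ Ha) (is_RInt_gen_scal _ (1 - lam) _ Hb)) Hc).
  apply gen_nonneg in H.
  - revert H; unfold minus, plus, scal, opp; simpl; unfold mult; simpl. lra.
  - intros t ht. unfold minus, plus, scal, opp; simpl; unfold mult; simpl.
    unfold gi, Rpower.
    pose proof (exp_convex ((a - 1) * ln t) ((b - 1) * ln t) lam hl).
    replace ((c - 1) * ln t) with (lam * ((a - 1) * ln t) + (1 - lam) * ((b - 1) * ln t))
      by (unfold c; ring).
    pose proof (exp_pos (- t)). nra.
Qed.

Lemma ballR x (e : posreal) y : Rabs (y - x) < e -> ball x e y.
Proof. intros h; unfold ball; simpl; unfold AbsRing_ball, abs, minus, plus, opp; simpl; exact h. Qed.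
Lemma ballR' x (e : R) y : ball x e y -> Rabs (y - x) < e.
Proof. intros h; unfold ball in h; simpl in h; unfold AbsRing_ball, abs, minus, plus, opp in h; simpl in h; exact h. Qed.

Lemma gamma_rec s : 0 < s -> Gamma (s + 1) = s * Gamma s.
Proof.
  intros hs.
  set (F := fun t => - (Rpower t s * exp (- t))).
  set (hr := fun y => gi (s + 1) y - s * gi s y).
  assert (hd : forall y, 0 < y -> is_derive F y (hr y)).
  { intros y hy. unfold F, hr, gi, Rpower. auto_derive. lra.
    replace (s + 1 - 1) with s by ring.
    replace ((s-1) * ln y) with (s * ln y + - ln y) by ring.
    rewrite exp_plus, (exp_Ropp (ln y)), exp_ln by lra. field; lra. }
  assert (hcont : forall y, 0 < y -> continuous hr y).
  { intros y hy. apply (ex_derive_continuous (K:=R_AbsRing) (V:=R_NormedModule)).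
    unfold hr, gi, Rpower. auto_derive; lra. }
  assert (H1 : is_RInt_gen (Derive F) (at_right 0) (Rbar_locally p_infty) (0 - 0)).
  { apply is_RInt_gen_Derive.
    - apply (Filter_prod _ _ _ (fun a => 0 < a) (fun b => 0 < b)).
      + exists (mkposreal 1 Rlt_0_1). intros y hy hy0. auto.
      + exists 0; auto.
      + intros a b ha hb x [hx _]; simpl in *.
        assert (0 < Rmin a b) by (apply Rmin_pos; lra).
        exists (hr x). apply hd; lra.
    - apply (Filter_prod _ _ _ (fun a => 0 < a) (fun b => 0 < b)).
      + exists (mkposreal 1 Rlt_0_1). intros y hy hy0. auto.
      + exists 0; auto.
      + intros a b ha hb x [hx _]; simpl in *.
        assert (0 < Rmin a b) by (apply Rmin_pos; lra).
        apply (continuous_ext_loc (T:=R_UniformSpace) (U:=R_UniformSpace) _ hr). 2: apply hcont; lra.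
        assert (hx0 : 0 < x) by lra.
        exists (mkposreal x hx0). intros y hy. apply ballR' in hy; simpl in hy.
        symmetry; apply is_derive_unique, hd.
        apply Rabs_def2 in hy. lra.
    - apply filterlim_locally. intros eps.
      set (d := Rpower eps (/ s)).
      assert (hd0 : 0 < d) by (unfold d, Rpower; apply exp_pos).
      exists (mkposreal d hd0). intros y hy hy0. apply ballR' in hy; simpl in hy.
      apply ballR. unfold F.
      rewrite Rminus_0_r, Rabs_pos_eq in hy by lra.
      assert (Rpower y s < eps).
      { replace (pos eps) with (Rpower d s).
        apply Rlt_Rpower_l; lra.
        unfold d; rewrite Rpower_mult, Rinv_l, Rpower_1 by (destruct eps; simpl; lra). reflexivity. }
      assert (exp (- y) <= 1) by (rewrite <- exp_0; apply exp_le'; lra).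
      assert (0 < Rpower y s) by (unfold Rpower; apply exp_pos).
      pose proof (exp_pos (-y)).
      rewrite Rminus_0_r, Rabs_Ropp, Rabs_pos_eq by nra. nra.
    - apply filterlim_locally. intros eps.
      destruct (bound_exp (s + 1)) as [C HC].
      exists (Rmax 1 (C / eps)). intros y hy.
      assert (h1 : 1 < y) by (eapply Rle_lt_trans; [apply Rmax_l | exact hy]).
      assert (h2 : C / eps < y) by (eapply Rle_lt_trans; [apply Rmax_r | exact hy]).
      apply ballR. unfold F. specialize (HC y ltac:(lra)).
      rewrite Rpower_plus, Rpower_1 in HC by lra.
      assert (0 < Rpower y s) by (unfold Rpower; apply exp_pos).
      pose proof (exp_pos (-y)).
      assert (C < eps * y).
      { destruct eps as [e he]; simpl in *.
        apply (Rmult_lt_compat_l e) in h2; auto. field_simplify in h2; lra. }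
      rewrite Rminus_0_r, Rabs_Ropp, Rabs_pos_eq by nra. nra. }
  assert (H2 : is_RInt_gen hr (at_right 0) (Rbar_locally p_infty) 0).
  { rewrite Rminus_0_r in H1.
    apply (is_RInt_gen_ext (Fa:=at_right 0) (Fb:=Rbar_locally p_infty) (Derive F) hr); auto.
    apply (Filter_prod _ _ _ (fun a => 0 < a) (fun b => 0 < b)).
    + exists (mkposreal 1 Rlt_0_1). intros y hy hy0. auto.
    + exists 0; auto.
    + intros a b ha hb x [hx _]; simpl in *.
      assert (0 < Rmin a b) by (apply Rmin_pos; lra).
      apply is_derive_unique, hd; lra. }
  destruct (gamma_exists (s + 1)) as [G1 _]; [lra|].
  destruct (gamma_exists s hs) as [G0 _].
  assert (H3 := is_RInt_gen_minus (Fa:=at_right 0) (Fb:=Rbar_locally p_infty) _ _ _ _ G1 (is_RInt_gen_scal (Fa:=at_right 0) (Fb:=Rbar_locally p_infty) _ s _ G0)).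
  assert (H4 : is_RInt_gen hr (at_right 0) (Rbar_locally p_infty)
      (minus (Gamma (s + 1)) (scal s (Gamma s)))).
  { apply (is_RInt_gen_ext (Fa:=at_right 0) (Fb:=Rbar_locally p_infty) (fun y : R => minus (gi (s + 1) y) ((fun y0 : R => scal s (gi s y0)) y)) hr); [|exact H3].
    apply (Filter_prod _ _ _ (fun a => True) (fun b => True)).
    + exists (mkposreal 1 Rlt_0_1). intros y hy hy0. auto.
    + exists 0; auto.
    + intros a b _ _ x _. unfold hr, minus, plus, opp, scal; simpl; unfold mult; simpl. ring. }
  apply (is_RInt_gen_unique (V:=R_CompleteNormedModule)) in H2.
  apply (is_RInt_gen_unique (V:=R_CompleteNormedModule)) in H4.
  rewrite H2 in H4. revert H4. unfold minus, plus, opp, scal; simpl; unfold mult; simpl. lra.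
Qed.

Lemma gamma1_pos : 0 < Gamma 1.
Proof.
  destruct (gamma_exists 1 Rlt_0_1) as [_ H].
  eapply Rlt_le_trans; [|apply (H 1 2); lra].
  apply RInt_gt_0. lra. intros; apply gi_pos; lra.
  intros; apply gi_cont; lra.
Qed.

Definition nu (k : nat) := / (INR (S k) + 1).

Lemma nu_pos k : 0 < nu k.
Proof. unfold nu; apply Rinv_0_lt_compat; pose proof (pos_INR (S k)); lra. Qed.

Lemma nu_le k : nu k <= / 2.
Proof.
  unfold nu; apply Rinv_le_contravar; [lra|]. rewrite S_INR; pose proof (pos_INR k); lra.
Qed.

Lemma nu_decr k : nu (S k) < nu k.
Proof.
  unfold nu; apply Rinv_lt_contravar.
  - apply Rmult_lt_0_compat; pose proof (pos_INR (S k)); pose proof (pos_INR (S (S k))); lra.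
  - rewrite (S_INR (S k)); lra.
Qed.

Lemma nu_lim : is_lim_seq nu 0.
Proof.
  unfold nu.
  assert (H : is_lim_seq (fun k => INR (S k) + 1) p_infty).
  { apply (filterlim_ge_p_infty (F := eventually) INR).
    - exists 0%nat; intros n _. rewrite S_INR; lra.
    - apply is_lim_seq_INR. }
  apply is_lim_seq_inv in H; [|discriminate]. exact H.
Qed.

Definition Dk (k : nat) := (Gamma (1 - nu k) - Gamma 1) / nu k.

Lemma Dk_nonneg k : 0 <= Dk k.
Proof.
  unfold Dk. pose proof (nu_pos k); pose proof (nu_le k).
  set (v := nu k) in *.
  set (lam := / (1 + v)).
  assert (hl : 0 < lam < 1).
  { unfold lam; split. apply Rinv_0_lt_compat; lra.
    rewrite <- Rinv_1; apply Rinv_lt_contravar; lra. }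
  assert (HC := gamma_convex (1 - v) 2 lam ltac:(lra) ltac:(lra) ltac:(lra)).
  replace (lam * (1 - v) + (1 - lam) * 2) with 1 in HC by (unfold lam; field; lra).
  replace 2 with (1 + 1) in HC by ring. rewrite gamma_rec, Rmult_1_l in HC by lra.
  apply Rdiv_le_0_compat; [|lra]. nra.
Qed.

Lemma Dk_decr k : Dk (S k) <= Dk k.
Proof.
  unfold Dk. pose proof (nu_pos k); pose proof (nu_le k); pose proof (nu_decr k);
  pose proof (nu_pos (S k)).
  set (v := nu k) in *. set (w := nu (S k)) in *.
  set (lam := w / v).
  assert (hl : 0 < lam < 1).
  { unfold lam; split. apply Rdiv_lt_0_compat; lra.
    apply (Rmult_lt_reg_r v); [lra|]. unfold Rdiv; rewrite Rmult_assoc, Rinv_l; lra. }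
  assert (HC := gamma_convex (1 - v) 1 lam ltac:(lra) ltac:(lra) ltac:(lra)).
  replace (lam * (1 - v) + (1 - lam) * 1) with (1 - w) in HC by (unfold lam; field; lra).
  assert (Hk : Gamma (1 - w) - Gamma 1 <= lam * (Gamma (1 - v) - Gamma 1)) by lra.
  unfold lam in Hk.
  apply (Rmult_le_reg_r w); [lra|].
  unfold Rdiv at 1. rewrite Rmult_assoc, Rinv_l, Rmult_1_r by lra.
  replace ((Gamma (1 - v) - Gamma 1) / v * w) with (w / v * (Gamma (1 - v) - Gamma 1))
    by (field; lra). lra.
Qed.

Lemma Dk_lim : exists D : R, is_lim_seq Dk D.
Proof.
  destruct (ex_finite_lim_seq_decr Dk 0 Dk_decr Dk_nonneg) as [D HD]. exists D; exact HD.
Qed.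

Definition Q (m : nat) (v : R) := Gamma (INR m + 1) / Gamma (INR m - v + 1).

Lemma Q0_lim : exists b : R, is_lim_seq (fun k => (Q 0 (nu k) - 1) / nu k) b.
Proof.
  destruct Dk_lim as [D HD]. pose proof gamma1_pos as hG.
  exists (- D / (Gamma 1 + 0 * D)).
  apply is_lim_seq_ext with (fun k => - Dk k / (Gamma 1 + nu k * Dk k)).
  - intros k. unfold Q, Dk. simpl INR. pose proof (nu_pos k).
    replace (0 + 1) with 1 by ring. replace (0 - nu k + 1) with (1 - nu k) by ring.
    assert (0 <= Dk k) by apply Dk_nonneg. unfold Dk in H0.
    assert (Gamma 1 + nu k * ((Gamma (1 - nu k) - Gamma 1) / nu k) = Gamma (1 - nu k))
      by (field; lra).
    rewrite H1. assert (0 < Gamma (1 - nu k)).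
    { rewrite <- H1. pose proof (Rmult_le_pos _ _ (Rlt_le _ _ H) H0). lra. }
    field. split; lra.
  - apply is_lim_seq_div'.
    + apply (proj1 (is_lim_seq_opp Dk D)). exact HD.
    + apply is_lim_seq_plus'. apply is_lim_seq_const. apply is_lim_seq_mult'. apply nu_lim. exact HD.
    + lra.
Qed.

Lemma Q_rec m v : 0 < v < 1 -> Q (S m) v = (INR m + 1) / (INR m + 1 - v) * Q m v.
Proof.
  intros hv. unfold Q. rewrite S_INR. pose proof (pos_INR m).
  replace (INR m + 1 - v + 1) with ((INR m - v + 1) + 1) by ring.
  rewrite (gamma_rec (INR m + 1)), (gamma_rec (INR m - v + 1)) by lra.
  replace (INR m - v + 1) with (INR m + 1 - v) by ring.
  unfold Rdiv. rewrite !Rinv_mult. ring.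
Qed.

Fixpoint gam (b : R) (m : nat) : R :=
  match m with O => b | S m' => gam b m' + / (INR m' + 1) end.

Lemma Q_lim (b : R) (m : nat) : is_lim_seq (fun k => (Q 0 (nu k) - 1) / nu k) b ->
  is_lim_seq (fun k => (Q m (nu k) - 1) / nu k) (gam b m).
Proof.
  intros Hb. induction m as [|m IH]; simpl; auto.
  pose proof (pos_INR m).
  apply is_lim_seq_ext with
    (fun k => (INR m + 1) / (INR m + 1 - nu k) * ((Q m (nu k) - 1) / nu k) + / (INR m + 1 - nu k)).
  - intros k. pose proof (nu_pos k); pose proof (nu_le k).
    rewrite Q_rec by lra. field. lra.
  - replace (gam b m + / (INR m + 1)) with
      ((INR m + 1) / (INR m + 1 - 0) * gam b m + / (INR m + 1 - 0)) by (field; lra).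
    apply is_lim_seq_plus'.
    + apply is_lim_seq_mult'; [|exact IH].
      apply is_lim_seq_div'. apply is_lim_seq_const.
      apply is_lim_seq_minus'. apply is_lim_seq_const. apply nu_lim. lra.
    + replace (/ (INR m + 1 - 0)) with (1 / (INR m + 1 - 0)) by (field; lra).
      apply is_lim_seq_ext with (fun k => 1 / (INR m + 1 - nu k)).
      intros; field. pose proof (nu_pos n); pose proof (nu_le n); lra.
      apply is_lim_seq_div'. apply is_lim_seq_const.
      apply is_lim_seq_minus'. apply is_lim_seq_const. apply nu_lim. lra.
Qed.

Lemma exp_quot c : is_lim_seq (fun k => (exp (c * nu k) - 1) / nu k) c.
Proof.
  assert (Hd : derivable_pt_lim (fun h => exp (c * h)) 0 c).
  { apply is_derive_Reals. auto_derive; auto. rewrite Rmult_0_r, exp_0; ring. }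
  apply is_lim_seq_Reals. intros eps heps.
  destruct (Hd eps heps) as [del Hdel].
  pose proof nu_lim as Hn. apply is_lim_seq_Reals in Hn.
  destruct (Hn del (cond_pos del)) as [N HN].
  exists N. intros n hn. specialize (HN n hn). unfold R_dist in *.
  pose proof (nu_pos n).
  specialize (Hdel (nu n) ltac:(lra) ltac:(rewrite Rminus_0_r in HN; exact HN)).
  rewrite Rplus_0_l, Rmult_0_r, exp_0 in Hdel. exact Hdel.
Qed.

Lemma lnD_pow_val (b : R) m x :
  is_lim_seq (fun k => (Q 0 (nu k) - 1) / nu k) b -> 0 < x ->
  lnD_pow (INR m) x = Rpower x (INR m) * (gam b m - ln x).
Proof.
  intros Hb hx. unfold lnD_pow, Lim.
  rewrite (is_lim_seq_unique _ (Rpower x (INR m) * (gam b m - ln x))). reflexivity.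
  apply is_lim_seq_incr_1.
  apply is_lim_seq_ext with
   (fun k => Rpower x (INR m) * (Q m (nu k) * ((exp ((- ln x) * nu k) - 1) / nu k)
                                + (Q m (nu k) - 1) / nu k)).
  - intros k. change (Rbar_loc_seq 0 (S k)) with (0 + / (INR (S k) + 1)). replace (0 + / (INR (S k) + 1)) with (nu k) by (unfold nu; ring).
    unfold frac_deriv_pow. fold (Q m (nu k)).
    replace (INR m - nu k) with (INR m + - nu k) by ring.
    rewrite Rpower_plus. unfold Rpower.
    replace (- nu k * ln x) with (- ln x * nu k) by ring.
    pose proof (nu_pos k). field. lra.
  - replace (Rpower x (INR m) * (gam b m - ln x)) with
      (Rpower x (INR m) * ((1 + 0 * gam b m) * (- ln x) + gam b m)) by ring.
    apply is_lim_seq_mult'. apply is_lim_seq_const.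
    apply is_lim_seq_plus'; [|apply Q_lim; exact Hb].
    apply is_lim_seq_mult'; [|apply exp_quot].
    apply is_lim_seq_ext with (fun k => 1 + nu k * ((Q m (nu k) - 1) / nu k)).
    + intros k; pose proof (nu_pos k); field; lra.
    + apply is_lim_seq_plus'. apply is_lim_seq_const.
      apply is_lim_seq_mult'. apply nu_lim. apply Q_lim; exact Hb.
Qed.

Lemma Derive_main (b : R) n x :
  is_lim_seq (fun k => (Q 0 (nu k) - 1) / nu k) b -> 0 < x ->
  Derive (fun y => lnD (monomial n) y) x
  = INR n * Rpower x (INR n - 1) * (gam b n - ln x) - Rpower x (INR n - 1).
Proof.
  intros Hb hx.
  rewrite (Derive_ext_loc _ (fun y => exp (INR n * ln y) * (gam b n - ln y))).
  - apply is_derive_unique. auto_derive. lra.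
    unfold Rpower.
    replace ((INR n - 1) * ln x) with (INR n * ln x + - ln x) by ring.
    rewrite exp_plus, (exp_Ropp (ln x)), exp_ln by lra. field. lra.
  - exists (mkposreal x hx). intros y hy. apply ballR' in hy; simpl in hy.
    apply Rabs_def2 in hy. unfold lnD, monomial; simpl List.fold_right.
    rewrite (lnD_pow_val b n y Hb) by lra. unfold Rpower. simpl fst. ring.
Qed.

Lemma d_pc_single c mu : mu <> 0 -> d_pc (cons (c, mu) nil) = cons (c * mu, mu - 1) nil.
Proof. intros h; unfold d_pc; simpl. destruct (Req_EM_T mu 0); [contradiction|reflexivity]. Qed.

Theorem mainTheorem5 (n : nat) (x : R) (hx : 0 < x) :
  lnD (d_pc (monomial n)) x - Derive (fun y => lnD (monomial n) y) x
  = (if Nat.eqb n 0 then 1 else 0) / x.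
Proof.
  destruct Q0_lim as [b Hb].
  rewrite (Derive_main b n x Hb hx).
  destruct n as [|n'].
  - unfold d_pc, monomial; simpl. destruct (Req_dec_T 0 0) as [_|h]; [|lra].
    simpl. unfold Rpower. replace ((0 - 1) * ln x) with (- ln x) by ring.
    rewrite exp_Ropp, exp_ln by lra. field. lra.
  - unfold monomial. rewrite d_pc_single.
    2: pose proof (pos_INR n'); rewrite S_INR; lra.
    + unfold lnD; cbn [List.fold_right fst snd Nat.eqb].
      replace (INR (S n') - 1) with (INR n') by (rewrite S_INR; ring).
      rewrite (lnD_pow_val b n' x Hb hx). simpl gam. rewrite S_INR.
      pose proof (pos_INR n'). field. lra.
Qed.
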